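(* Let $\mathcal{A}=(\Sigma,Q,\delta,q_0,F)$ be a WDBA with $L:=L(\mathcal{A})$ and let $D\subseteq\Sigma^\omega$ be a regular set of don't care words with trivial right-congruence. Then $\mathcal{A}$ is $D$-minimal if and only if $\mathcal{A}$ has informative $D$-congruence.
   Context: A DBA $(\Sigma,Q,\delta,q_0,F)$ is a finite deterministic transition system (all states reachable) with $F\subseteq Q$, accepting $\alpha\in\Sigma^\omega$ iff some state of $F$ is visited infinitely often in the run on $\alpha$. A WDBA is a DBA in which every maximal strongly connected component of states is either contained in $F$ or disjoint from $F$. $L\equiv_D L'$ means $L\setminus D=L'\setminus D$. A WDBA $\mathcal{A}$ is $D$-minimal if there is no WDBA $\mathcal{B}$ with fewer states and $L(\mathcal{B})\equiv_D L(\mathcal{A})$. For $L\subseteq\Sigma^\omega$, $u\sim_L v$ iff for all $\alpha$: $u\alpha\in L\iff v\alpha\in L$; $D$ has trivial right-congruence if $\sim_D$ has exactly one class. $w\sim_{L,D}w'$ iff for all $\alpha\in\Sigma^\omega\setminus D$: $w\alpha\in L\iff w'\alpha\in L$; this is a right-congruence, and $\mathcal{T}_{L,D}$ is its induced transition system (states the classes $[u]$, initial $[\epsilon]$, transitions $[u]\xrightarrow{\sigma}[u\sigma]$). $\mathcal{A}$ has informative $D$-congruence if its transition system is isomorphic to $\mathcal{T}_{L(\mathcal{A}),D}$. *)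

(* Defs.v *)
From mathcomp Require Import all_boot.
Set Implicit Arguments. Unset Strict Implicit. Unset Printing Implicit Defensive.

Definition prepend (S : Type) (u : seq S) (a : nat -> S) : nat -> S :=
  fun n => if n < size u then nth (a 0) u n else a (n - size u).

Definition dstar (S Q : Type) (delta : Q -> S -> Q) (q : Q) (u : seq S) : Q :=
  foldl delta q u.

Definition drun (S Q : Type) (delta : Q -> S -> Q) (q0 : Q) (a : nat -> S) : nat -> Q :=
  fun n => dstar delta q0 (mkseq a n).

Definition DBA_lang (S : Type) (Q : finType) (delta : Q -> S -> Q) (q0 : Q)
  (F : {set Q}) : (nat -> S) -> Prop :=
  fun a => forall N, exists n, N <= n /\ drun delta q0 a n \in F.

Definition reaches (S Q : Type) (delta : Q -> S -> Q) (p q : Q) : Prop :=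
  exists u : seq S, dstar delta p u = q.

Definition all_reachable (S Q : Type) (delta : Q -> S -> Q) (q0 : Q) : Prop :=
  forall q, reaches delta q0 q.

Definition is_DBA (S : Type) (Q : finType) (delta : Q -> S -> Q) (q0 : Q)
  (F : {set Q}) : Prop := all_reachable delta q0.

(* WDBA: each maximal SCC (class of mutual reachability) is inside F or disjoint from F *)
Definition is_WDBA (S : Type) (Q : finType) (delta : Q -> S -> Q) (q0 : Q)
  (F : {set Q}) : Prop :=
  is_DBA delta q0 F /\
  forall p q, reaches delta p q -> reaches delta q p -> (p \in F) = (q \in F).

Definition D_equiv (S : Type) (D L L' : (nat -> S) -> Prop) : Prop :=
  forall a, ~ D a -> (L a <-> L' a).

Definition D_minimal (S : finType) (Q : finType) (delta : Q -> S -> Q) (q0 : Q)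
  (F : {set Q}) (D : (nat -> S) -> Prop) : Prop :=
  ~ exists (QB : finType) (deltaB : QB -> S -> QB) (qB : QB) (FB : {set QB}),
      is_WDBA deltaB qB FB /\ #|QB| < #|Q| /\
      D_equiv D (DBA_lang deltaB qB FB) (DBA_lang delta q0 F).

Definition NBA_lang (S : Type) (P : finType) (I : {set P}) (Delta : P -> S -> P -> bool)
  (G : {set P}) : (nat -> S) -> Prop :=
  fun a => exists r : nat -> P, r 0 \in I /\ (forall n, Delta (r n) (a n) (r n.+1)) /\
     forall N, exists n, N <= n /\ r n \in G.

Definition omega_regular (S : finType) (D : (nat -> S) -> Prop) : Prop :=
  exists (P : finType) (I : {set P}) (Delta : P -> S -> P -> bool) (G : {set P}),
    forall a, D a <-> NBA_lang I Delta G a.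

Definition right_cong (S : Type) (L : (nat -> S) -> Prop) (u v : seq S) : Prop :=
  forall a, L (prepend u a) <-> L (prepend v a).

Definition trivial_right_congruence (S : Type) (D : (nat -> S) -> Prop) : Prop :=
  forall u v : seq S, right_cong D u v.

Definition right_cong_D (S : Type) (L D : (nat -> S) -> Prop) (w w' : seq S) : Prop :=
  forall a, ~ D a -> (L (prepend w a) <-> L (prepend w' a)).

Definition cls (S : Type) (L D : (nat -> S) -> Prop) (u : seq S) : seq S -> Prop :=
  fun w => right_cong_D L D w u.

(* The transition system (Q, delta, q0) is isomorphic to T_{L,D}
   (states: classes [u]; initial [eps]; transitions [u] -a-> [ua]):
   phi is a bijection from Q onto the set of classes, maps q0 to [eps]
   and commutes with the transitions. *)
Definition iso_to_T (S : Type) (Q : Type) (delta : Q -> S -> Q) (q0 : Q)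
  (L D : (nat -> S) -> Prop) : Prop :=
  exists phi : Q -> (seq S -> Prop),
    (forall q, exists u, phi q = cls L D u) /\
    (forall u, exists q, phi q = cls L D u) /\
    (forall p q, phi p = phi q -> p = q) /\
    phi q0 = cls L D [::] /\
    (forall q a u, phi q = cls L D u -> phi (delta q a) = cls L D (rcons u a)).

Definition informative_D_congruence (S : finType) (Q : finType) (delta : Q -> S -> Q)
  (q0 : Q) (F : {set Q}) (D : (nat -> S) -> Prop) : Prop :=
  iso_to_T delta q0 (DBA_lang delta q0 F) D.

(* Main.v *)
From Stdlib Require Import Classical ClassicalEpsilon FunctionalExtensionality PropExtensionality.
Require Import Defs.
From mathcomp Require Import all_boot.
Set Implicit Arguments. Unset Strict Implicit. Unset Printing Implicit Defensive.

Definition shiftw (S : Type) (a : nat -> S) (i : nat) : nat -> S := fun n => a (i + n).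

Lemma mkseq_split (S : Type) (a : nat -> S) i k :
  mkseq a (i + k) = mkseq a i ++ mkseq (shiftw a i) k.
Proof.
rewrite /mkseq iotaD map_cat add0n; congr (_ ++ _).
by rewrite -{1}(addn0 i) iotaDl -map_comp.
Qed.

Lemma dstar_cat (S Q : Type) (d : Q -> S -> Q) p u v :
  dstar d p (u ++ v) = dstar d (dstar d p u) v.
Proof. exact: foldl_cat. Qed.

Lemma dstar_rcons (S Q : Type) (d : Q -> S -> Q) p u x :
  dstar d p (rcons u x) = d (dstar d p u) x.
Proof. exact: foldl_rcons. Qed.

Lemma reaches_trans (S Q : Type) (d : Q -> S -> Q) p q r :
  reaches d p q -> reaches d q r -> reaches d p r.
Proof. by move=> [u <-] [v <-]; exists (u ++ v); rewrite dstar_cat. Qed.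

Lemma reaches_refl (S Q : Type) (d : Q -> S -> Q) p : reaches d p p.
Proof. by exists [::]. Qed.

Definition acc (S : Type) (Q : finType) (d : Q -> S -> Q) (F : {set Q}) s a :=
  forall N, exists n, N <= n /\ dstar d s (mkseq a n) \in F.

Lemma acc_ext (S : Type) (Q : finType) (d : Q -> S -> Q) F s a b :
  a =1 b -> acc d F s a <-> acc d F s b.
Proof.
move=> ab; split=> H N; have [n [Hn Hf]] := H N; exists n; split=> //.
  by rewrite -(eq_mkseq ab).
by rewrite (eq_mkseq ab).
Qed.

Lemma acc_shift (S : Type) (Q : finType) (d : Q -> S -> Q) F s a i :
  acc d F s a <-> acc d F (dstar d s (mkseq a i)) (shiftw a i).
Proof.
split=> H N.
  have [n [Hn Hf]] := H (i + N); exists (n - i); split.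
    by rewrite leq_subRL ?(leq_trans (leq_addr _ _) Hn).
  rewrite -dstar_cat -mkseq_split subnKC //.
  exact: leq_trans (leq_addr _ _) Hn.
have [n [Hn Hf]] := H N; exists (i + n); split.
  exact: leq_trans Hn (leq_addl _ _).
by rewrite mkseq_split dstar_cat.
Qed.

Lemma mkseq_prepend (S : Type) (u : seq S) a : mkseq (prepend u a) (size u) = u.
Proof.
apply: (@eq_from_nth _ (a 0)); first by rewrite size_mkseq.
by move=> i; rewrite size_mkseq => Hi; rewrite nth_mkseq // /prepend Hi.
Qed.

Lemma shift_prepend (S : Type) (u : seq S) a : shiftw (prepend u a) (size u) =1 a.
Proof. by move=> n; rewrite /shiftw /prepend ltnNge leq_addr /= addKn. Qed.

Lemma acc_prepend (S : Type) (Q : finType) (d : Q -> S -> Q) F s u a :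
  acc d F s (prepend u a) <-> acc d F (dstar d s u) a.
Proof.
rewrite (acc_shift _ _ _ _ (size u)) mkseq_prepend.
exact: acc_ext (shift_prepend u a).
Qed.

Lemma prepend_nil (S : Type) (a : nat -> S) : prepend [::] a = a.
Proof. by apply: functional_extensionality => n; rewrite /prepend /= subn0. Qed.

Lemma prepend_shift (S : Type) (a : nat -> S) i : prepend (mkseq a i) (shiftw a i) = a.
Proof.
apply: functional_extensionality => n; rewrite /prepend size_mkseq.
case: ltnP => Hn; first by rewrite nth_mkseq.
by rewrite /shiftw subnKC.
Qed.

Lemma D_inv (S : Type) (D : (nat -> S) -> Prop) u a :
  trivial_right_congruence D -> D (prepend u a) <-> D a.
Proof. by move=> H; rewrite -{2}(prepend_nil a); apply: H. Qed.

Lemma D_shift (S : Type) (D : (nat -> S) -> Prop) a i :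
  trivial_right_congruence D -> D (shiftw a i) <-> D a.
Proof. by move=> H; rewrite -{2}(prepend_shift a i); split => /(D_inv _ _ H). Qed.
Lemma inf_pigeon (T : finType) (r : nat -> T) (P : pred T) :
  (forall N, exists n, N <= n /\ P (r n)) ->
  exists x, P x /\ forall N, exists n, N <= n /\ r n = x.
Proof.
move=> H; apply: NNPP => C.
have Hx : forall x, P x -> exists N, forall n, N <= n -> r n <> x.
  move=> x Px; apply: NNPP => C2; apply: C; exists x; split=> // N.
  apply: NNPP => C3; apply: C2; exists N => n Hn E; apply: C3; by exists n.
have : forall s : seq T, exists M, forall n, M <= n -> forall x, x \in s -> P x -> r n <> x.
  elim=> [|y s [M HM]]; first by exists 0.
  case Py: (P y).
    have [N HN] := Hx y Py; exists (maxn M N) => n Hn x.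
    rewrite inE => /orP [/eqP -> _|xs Px].
      by apply: HN; apply: leq_trans Hn; rewrite leq_maxr.
    by apply: HM => //; apply: leq_trans Hn; rewrite leq_maxl.
  exists M => n Hn x; rewrite inE => /orP [/eqP -> |xs Px]; first by rewrite Py.
  exact: HM.
case/(_ (enum T)) => M HM; have [n [Hn Pn]] := H M.
exact: (HM n Hn (r n) (mem_enum _ _) Pn).
Qed.

Lemma chain_contra (S : Type) (Q : finType) (d : Q -> S -> Q) (F : {set Q})
  (P1 P2 : Q -> Prop) :
  (forall p q, reaches d p q -> reaches d q p -> (p \in F) = (q \in F)) ->
  (forall s, P1 s -> exists f, reaches d s f /\ f \in F /\ exists s', reaches d f s' /\ P2 s') ->
  (forall s, P2 s -> exists g, reaches d s g /\ g \notin F /\ exists s', reaches d g s' /\ P1 s') ->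
  forall s, P1 s -> False.
Proof.
move=> W H1 H2.
pose Chain n x := exists e : nat -> Q, e 0 = x /\
   forall i, i < n -> reaches d (e i) (e i.+1) /\ (e i \in F) != (e i.+1 \in F).
have ext : forall n x y e, e 0 = y -> reaches d x y -> (x \in F) != (y \in F) ->
    (forall i, i < n -> reaches d (e i) (e i.+1) /\ (e i \in F) != (e i.+1 \in F)) ->
    Chain n.+1 x.
  move=> n x y e e0 rxy nxy He.
  exists (fun i => if i is i'.+1 then e i' else x); split=> // [[|i]] Hi /=.
    by rewrite e0.
  exact: He.
have claim : forall n, (forall s, P1 s -> exists f, reaches d s f /\ f \in F /\ Chain n f) /\
                  (forall s, P2 s -> exists g, reaches d s g /\ g \notin F /\ Chain n g).
  elim=> [|n [IH1 IH2]].
    split.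
      move=> s /H1 [f [rf [fF _]]]; exists f; split=> //; split=> //.
      by exists (fun _ => f).
    move=> s /H2 [f [rf [fF _]]]; exists f; split=> //; split=> //.
    by exists (fun _ => f).
  split.
    move=> s /H1 [f [rf [fF [s' [rs' P2s']]]]].
    have [g [rg [gF [e [e0 He]]]]] := IH2 s' P2s'.
    exists f; split=> //; split=> //; apply: (ext n f g e e0) => //.
      exact: reaches_trans rs' rg.
    by rewrite fF (negbTE gF).
  move=> s /H2 [f [rf [fF [s' [rs' P1s']]]]].
  have [g [rg [gF [e [e0 He]]]]] := IH1 s' P1s'.
  exists f; split=> //; split=> //; apply: (ext n f g e e0) => //.
    exact: reaches_trans rs' rg.
  by rewrite gF (negbTE fF).
move=> s P1s; have [f [_ [_ [e [_ He]]]]] := (claim #|Q|).1 s P1s.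
have reach : forall i k, i + k <= #|Q| -> reaches d (e i) (e (i + k)).
  move=> i; elim=> [|k IH] Hk; first by rewrite addn0; apply: reaches_refl.
  apply: reaches_trans (IH (leq_trans (leq_addr 1 _) _)) _.
    by rewrite addn1 -addnS.
  rewrite addnS; apply: (He _ _).1; by rewrite -addnS.
pose g : 'I_#|Q|.+1 -> Q := fun i => e i.
have : ~ injective g.
  move=> /leq_card; by rewrite card_ord ltnn.
move=> ninj; apply: ninj => x y gxy; apply: NNPP => nxy.
have key : forall i j, i < j -> j <= #|Q| -> e i = e j -> False.
  move=> i j ij jQ eij.
  have [r1 n1] := He i (leq_trans ij jQ).
  have r2 : reaches d (e i.+1) (e i).
    rewrite eij -(subnKC ij); apply: reach; by rewrite subnKC.
  by move: n1; rewrite (W _ _ r1 r2) eqxx.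
case: (ltngtP x y) => Hxy.
- by apply: (key x y Hxy) => //; rewrite -ltnS.
- by apply: (key y x Hxy) => //; rewrite -ltnS.
- by apply: nxy; apply: val_inj.
Qed.
Definition Eq (S : Type) (Q : finType) (d : Q -> S -> Q) (F : {set Q})
  (D : (nat -> S) -> Prop) s t :=
  forall a, ~ D a -> (acc d F s a <-> acc d F t a).

Lemma Eq_refl S Q d F D s : @Eq S Q d F D s s.
Proof. by []. Qed.
Lemma Eq_sym S Q d F D s t : @Eq S Q d F D s t -> Eq d F D t s.
Proof. by move=> H a nD; apply: iff_sym; apply: H. Qed.
Lemma Eq_trans S Q d F D s t r : @Eq S Q d F D s t -> Eq d F D t r -> Eq d F D s r.
Proof. by move=> H1 H2 a nD; apply: iff_trans (H1 a nD) (H2 a nD). Qed.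

Lemma Eq_delta S Q d F D s t x : trivial_right_congruence D ->
  @Eq S Q d F D s t -> Eq d F D (d s x) (d t x).
Proof.
move=> Htr H a nD.
have nD' : ~ D (prepend [:: x] a) by move/(D_inv _ _ Htr).
have := H _ nD'; rewrite !acc_prepend /=; done.
Qed.

Lemma Eq_dstar S Q d F D s t w : trivial_right_congruence D ->
  @Eq S Q d F D s t -> Eq d F D (dstar d s w) (dstar d t w).
Proof.
move=> Htr; elim: w s t => [|x w IH] s t H //=.
by apply: IH; apply: Eq_delta.
Qed.

Lemma rcd_E (S : Type) (Q : finType) d (q0 : Q) F (D : (nat -> S) -> Prop) u v :
  right_cong_D (DBA_lang d q0 F) D u v <-> Eq d F D (dstar d q0 u) (dstar d q0 v).
Proof.
split=> H a nD.
  have := H a nD; rewrite /DBA_lang /drun.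
  by move=> h; apply: iff_trans (iff_sym (acc_prepend _ _ _ _ _)) (iff_trans h (acc_prepend _ _ _ _ _)).
have := H a nD; move=> h.
exact: iff_trans (acc_prepend d F q0 u a) (iff_trans h (iff_sym (acc_prepend d F q0 v a))).
Qed.

Lemma cls_eq (S : Type) (L D : (nat -> S) -> Prop) u v :
  right_cong_D L D u v -> cls L D u = cls L D v.
Proof.
move=> H; apply: functional_extensionality => w; apply: propositional_extensionality.
rewrite /cls; split=> Hw a nDa.
  exact: (iff_trans (Hw a nDa) (H a nDa)).
exact: (iff_trans (Hw a nDa) (iff_sym (H a nDa))).
Qed.

Lemma cls_eq_inv (S : Type) (L D : (nat -> S) -> Prop) u v :
  cls L D u = cls L D v -> right_cong_D L D u v.
Proof.
move=> H; have h : cls L D u u by rewrite /cls /right_cong_D => a _; split.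
by rewrite H in h.
Qed.

Lemma inf_min (Sigma Q : finType) (d : Q -> Sigma -> Q) (q0 : Q) (F : {set Q})
  (D : (nat -> Sigma) -> Prop) :
  trivial_right_congruence D -> informative_D_congruence d q0 F D -> D_minimal d q0 F D.
Proof.
move=> Htr [phi [H1 [H2 [Hinj _]]]] [QB [dB [qB [FB [_ [Hlt Heq]]]]]].
have wordof : forall q, {u | phi q = cls (DBA_lang d q0 F) D u}.
  by move=> q; apply: constructive_indefinite_description; apply: H1.
pose g q := dstar dB qB (proj1_sig (wordof q)).
have : injective g.
  move=> p q gpq; apply: Hinj.
  rewrite (proj2_sig (wordof p)) (proj2_sig (wordof q)); apply: cls_eq.
  move=> a nDa.
  have nD : forall u, ~ D (prepend u a) by move=> u /(D_inv _ _ Htr).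
  apply: iff_trans (iff_sym (Heq _ (nD _))) _.
  apply: iff_trans _ (Heq _ (nD _)).
  change (acc dB FB qB (prepend (sval (wordof p)) a) <-> acc dB FB qB (prepend (sval (wordof q)) a)).
  apply: iff_trans (acc_prepend _ _ _ _ _) _.
  apply: iff_trans _ (iff_sym (acc_prepend _ _ _ _ _)).
  by rewrite /g in gpq; rewrite gpq.
by move/leq_card; rewrite leqNgt Hlt.
Qed.
Definition asb (P : Prop) : bool := if excluded_middle_informative P then true else false.
Lemma asbP (P : Prop) : asb P = true <-> P.
Proof. by rewrite /asb; case: excluded_middle_informative. Qed.


Definition Eb (S : Type) (Q : finType) (d : Q -> S -> Q) F D p q : bool := asb (@Eq S Q d F D p q).
Definition rep (S : Type) (Q : finType) (d : Q -> S -> Q) F D q : Q :=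
  odflt q [pick p | Eb d F D p q].

Lemma pick_some (S : Type) (Q : finType) (d : Q -> S -> Q) F D q :
  exists r, [pick p | Eb d F D p q] = Some r /\ Eq d F D r q.
Proof.
case: pickP => [r /asbP Hr | H]; first by exists r.
by move: (H q); rewrite /Eb; have /asbP -> : Eq d F D q q by [].
Qed.

Lemma rep_E (S : Type) (Q : finType) (d : Q -> S -> Q) F D q : Eq d F D (rep d F D q) q.
Proof. by rewrite /rep; have [r [-> H]] := @pick_some _ _ d F D q. Qed.

Lemma rep_eq (S : Type) (Q : finType) (d : Q -> S -> Q) F D p q :
  Eq d F D p q -> rep d F D p = rep d F D q.
Proof.
move=> Hpq; rewrite /rep.
have e : [pick x | Eb d F D x p] = [pick x | Eb d F D x q].
  apply: eq_pick => x; rewrite /Eb; congr asb.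
  apply: propositional_extensionality; split=> H.
    exact: Eq_trans H Hpq.
  exact: Eq_trans H (Eq_sym Hpq).
rewrite e; by have [r [-> _]] := @pick_some _ _ d F D q.
Qed.

Lemma rep_rep (S : Type) (Q : finType) (d : Q -> S -> Q) F D q :
  rep d F D (rep d F D q) == rep d F D q.
Proof. by rewrite (rep_eq (@rep_E _ _ d F D q)). Qed.

Definition QBt (S : Type) (Q : finType) (d : Q -> S -> Q) F D :=
  {q : Q | rep d F D q == q}.

Definition projB (S : Type) (Q : finType) (d : Q -> S -> Q) F D q : QBt d F D :=
  exist (fun q => rep d F D q == q) (rep d F D q) (rep_rep d F D q).

Definition dB (S : Type) (Q : finType) (d : Q -> S -> Q) F D (x : QBt d F D) a :=
  projB d F D (d (val x) a).

Lemma proj_d (S : Type) (Q : finType) (d : Q -> S -> Q) F D s a :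
  trivial_right_congruence D ->
  dB (projB d F D s) a = projB d F D (d s a).
Proof.
move=> Htr; apply: val_inj => /=; apply: rep_eq; apply: Eq_delta => //.
exact: rep_E.
Qed.

Lemma proj_dstar (S : Type) (Q : finType) (d : Q -> S -> Q) F D s w :
  trivial_right_congruence D ->
  dstar (@dB S Q d F D) (projB d F D s) w = projB d F D (dstar d s w).
Proof.
move=> Htr; elim: w s => [|x w IH] s //=.
by rewrite proj_d // IH.
Qed.

Lemma proj_E (S : Type) (Q : finType) (d : Q -> S -> Q) F D s t :
  projB d F D s = projB d F D t -> Eq d F D s t.
Proof.
move=> /(f_equal val) /= H.
apply: Eq_trans (Eq_sym (@rep_E _ _ d F D s)) _; rewrite H; exact: rep_E.
Qed.

Lemma proj_val (S : Type) (Q : finType) (d : Q -> S -> Q) F D (x : QBt d F D) :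
  projB d F D (val x) = x.
Proof. by apply: val_inj => /=; apply/eqP; apply: (valP x). Qed.

Definition GB (S : Type) (Q : finType) (d : Q -> S -> Q) (q0 : Q) F D (x : QBt d F D) : Prop :=
  exists b, ~ D b /\ acc d F q0 b /\ exists y, reaches (@dB S Q d F D) x y /\ reaches (@dB S Q d F D) y x /\
    forall N, exists n, N <= n /\ dstar (@dB S Q d F D) (projB d F D q0) (mkseq b n) = y.

Definition FBs (S : Type) (Q : finType) (d : Q -> S -> Q) (q0 : Q) F D : {set QBt d F D} :=
  [set x | asb (@GB S Q d q0 F D x)].
Lemma core (Sigma Q : finType) (d : Q -> Sigma -> Q) (q0 : Q) (F : {set Q})
  (D : (nat -> Sigma) -> Prop) :
  is_WDBA d q0 F -> trivial_right_congruence D -> D_minimal d q0 F D ->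
  forall p q, Eq d F D p q -> p = q.
Proof.
move=> [Hreach W] Htr Hmin p q Epq; apply: NNPP => npq; apply: Hmin.
pose pr := @projB Sigma Q d F D.
pose dd := @dB Sigma Q d F D.
pose FB := @FBs Sigma Q d q0 F D.
exists (QBt d F D), dd, (pr q0), FB.
have GFB : forall x, (x \in FB) <-> @GB _ _ d q0 F D x.
  by move=> x; rewrite /FB /FBs inE; apply: asbP.
split; [|split].
- split.
    move=> x; have [u Hu] := Hreach (val x); exists u.
    by rewrite /dd proj_dstar // Hu proj_val.
  move=> x y rxy ryx.
  have e : @GB _ _ d q0 F D x = @GB _ _ d q0 F D y.
    apply: propositional_extensionality.
    split=> - [b [nb [ab [z [r1 [r2 inf]]]]]]; exists b; split=> //; split=> //; exists z.
      split; [exact: reaches_trans ryx r1|split=> //]; exact: reaches_trans r2 rxy.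
    split; [exact: reaches_trans rxy r1|split=> //]; exact: reaches_trans r2 ryx.
  by rewrite /FB /FBs !inE e.
- rewrite card_sig.
  have [z nz] : exists z, rep d F D z != z.
    apply: NNPP => C; apply: npq.
    have hp : rep d F D p = p by apply/eqP; apply: NNPP => h; apply: C; exists p; apply/negP.
    have hq : rep d F D q = q by apply/eqP; apply: NNPP => h; apply: C; exists q; apply/negP.
    by rewrite -hp -hq; apply: rep_eq.
  have : 0 < #|[predC [pred x | rep d F D x == x]]|.
    by apply/card_gt0P; exists z; rewrite !inE.
  rewrite -(cardC [pred x | rep d F D x == x]) => h.
  by rewrite -[X in X < _]addn0 ltn_add2l.
- move=> a nDa; split.
  + move=> LBa; apply: NNPP => nacc.
    have [x [xF infx]] := inf_pigeon (r := fun n => dstar dd (pr q0) (mkseq a n)) (P := mem FB) LBa.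
    have [b [nDb [accb [y [rxy [ryx infy]]]]]] := (GFB x).1 xF.
    apply: (@chain_contra Sigma Q d F (fun s => pr s = y) (fun s => pr s = x) W _ _ (val y)).
    * move=> s Ps.
      have [i [_ Hi]] := infy 0.
      have Hi' := Hi; rewrite /dd proj_dstar // in Hi'.
      have Est : Eq d F D s (dstar d q0 (mkseq b i)) by apply: proj_E; exact: (etrans Ps (esym Hi')).
      have nDs : ~ D (shiftw b i) by move/(D_shift _ _ Htr).
      have accs : acc d F s (shiftw b i).
        exact: (proj2 (Est _ nDs) (proj1 (acc_shift d F q0 b i) accb)).
      have [m [_ Hm]] := accs 0.
      have [j [Hj Hjy]] := infy (i + m).
      have mji : m <= j - i by rewrite leq_subRL // (leq_trans (leq_addr _ _) Hj).
      have ij : i <= j by apply: leq_trans (leq_addr _ _) Hj.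
      pose z := dstar d s (mkseq (shiftw b i) (j - i)).
      have pz : pr z = y.
        rewrite /z /pr /dd in Ps Hi Hjy *.
        by rewrite -proj_dstar // Ps -{1}Hi -dstar_cat -mkseq_split subnKC.
      have [w Hw] := ryx.
      exists (dstar d s (mkseq (shiftw b i) m)); split; first by eexists.
      split=> //; exists (dstar d z w); split.
        exists (mkseq (shiftw (shiftw b i) m) (j - i - m) ++ w).
        by rewrite dstar_cat -(dstar_cat d s) -mkseq_split subnKC.
      rewrite /pr -proj_dstar //; rewrite /pr in pz; by rewrite pz.
    * move=> s Ps.
      have [i [_ Hi]] := infx 0.
      have Hi' := Hi; rewrite /dd proj_dstar // in Hi'.
      have Est : Eq d F D s (dstar d q0 (mkseq a i)) by apply: proj_E; exact: (etrans Ps (esym Hi')).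
      have nDs : ~ D (shiftw a i) by move/(D_shift _ _ Htr).
      have naccs : ~ acc d F s (shiftw a i).
        by move=> h; apply: nacc; exact: (proj2 (acc_shift d F q0 a i) (proj1 (Est _ nDs) h)).
      have [N HN] := not_all_ex_not _ _ naccs.
      have [j [Hj Hjy]] := infx (i + N).
      have Nji : N <= j - i by rewrite leq_subRL // (leq_trans (leq_addr _ _) Hj).
      have ij : i <= j by apply: leq_trans (leq_addr _ _) Hj.
      pose z := dstar d s (mkseq (shiftw a i) (j - i)).
      have pz : pr z = x.
        rewrite /z /pr /dd in Ps Hi Hjy *.
        by rewrite -proj_dstar // Ps -{1}Hi -dstar_cat -mkseq_split subnKC.
      have [w Hw] := rxy.
      exists z; split; first by eexists.
      split.
        apply/negP => zF; apply: HN; by exists (j - i).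
      exists (dstar d z w); split; first by eexists.
      rewrite /pr -proj_dstar //; rewrite /pr in pz; by rewrite pz.
    * exact: proj_val.
  + move=> La.
    have [y [_ infy]] := inf_pigeon (r := fun n => dstar dd (pr q0) (mkseq a n)) (P := predT)
       (fun N => ex_intro _ N (conj (leqnn N) isT)).
    have yF : y \in FB.
      apply/GFB; exists a; split=> //; split=> //; exists y.
      by split; [exact: reaches_refl|split; [exact: reaches_refl|]].
    move=> N; have [n [Hn Hy]] := infy N; exists n; split=> //.
    by rewrite /drun; change (dstar dd (pr q0) (mkseq a n) \in FB); rewrite Hy.
Qed.
Theorem theorem4 (Sigma Q : finType) (delta : Q -> Sigma -> Q) (q0 : Q) (F : {set Q})
  (D : (nat -> Sigma) -> Prop) :
  is_WDBA delta q0 F ->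
  omega_regular D ->
  trivial_right_congruence D ->
  (D_minimal delta q0 F D <-> informative_D_congruence delta q0 F D).
Proof.
move=> HW _ Htr; split; last exact: inf_min.
move=> Hmin.
have wordof : forall q, {u | dstar delta q0 u = q}.
  by move=> q; apply: constructive_indefinite_description; apply: HW.1.
pose word q := proj1_sig (wordof q).
have wordP : forall q, dstar delta q0 (word q) = q by move=> q; exact: proj2_sig (wordof q).
exists (fun q => cls (DBA_lang delta q0 F) D (word q)).
split; [|split; [|split; [|split]]].
- by move=> q; exists (word q).
- move=> u; exists (dstar delta q0 u); apply: cls_eq; apply/rcd_E; rewrite wordP.
  exact: Eq_refl.
- move=> p q H; move: (cls_eq_inv H) => /rcd_E; rewrite !wordP; exact: (core HW Htr Hmin).
- apply: cls_eq; apply/rcd_E; rewrite wordP; exact: Eq_refl.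
- move=> q a u H; move: (cls_eq_inv H) => /rcd_E; rewrite wordP => Equ.
  apply: cls_eq; apply/rcd_E; rewrite wordP dstar_rcons.
  exact: Eq_delta.
Qed.
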